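(* Let $H=(V,E,\omega,d)$ be a generalized hypergraph with $V=\{1,\dots,n\}$. For every $\rho\in R_n$ there exists a symmetric matrix $N_{\rho,z}\in M_n(K(z))$ such that for every real $\lambda>0$ the entries of $N_{\rho,z}$ have no pole at $z=\lambda$, the evaluated matrix $N_{\rho,\lambda}$ has non-negative entries, and $N_{\rho,\lambda}\,g=f$ for every $f\in U_\rho$ and every $g\in G_\lambda(f)$.
   Context: A generalized hypergraph $H=(V,E,\omega,d)$ consists of a finite set $V=\{1,\dots,n\}$, a set $E$ of nonempty subsets of $V$, a function $\omega\colon E\to\mathbb{R}_{>0}$ and a function $d\colon V\to\mathbb{R}_{>0}$, $x\mapsto d_x$ (no relation between $d$ and $\omega$ is assumed). Functions $V\to\mathbb{R}$ are identified with vectors $f=(f_1,\dots,f_n)^\top\in\mathbb{R}^n$; $\delta_x$ is the $x$-th standard basis vector. For $e\in E$, $B_e=\mathrm{Conv}\{\delta_x-\delta_y : x,y\in e\}$, and $L(f)=\{\sum_{e\in E}\omega_e\mathtt{b}_e(\mathtt{b}_e^\top f) : \mathtt{b}_e\in\operatorname{argmax}_{\mathtt b\in B_e}\mathtt b^\top f\}\subset\mathbb{R}^n$ (sums of sets are Minkowski sums). $D=\mathrm{diag}(d_1,\dots,d_n)$. $\mathbb{R}^n=\bigsqcup_{\rho\in R_n}U_\rho$ is the partition into order-pattern classes: $f,g$ lie in the same $U_\rho$ iff $\mathrm{sgn}(f_x-f_y)=\mathrm{sgn}(g_x-g_y)$ for all $x,y\in V$. $K=\mathbb{Q}(\{\omega_e\}_{e\in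 E},\{d_x\}_{x\in V})\subset\mathbb{R}$ is the subfield generated by the weights, and $K(z)$ the field of rational functions in $z$ over $K$. For $\lambda>0$, $G_\lambda\colon\mathbb{R}^n\to2^{\mathbb{R}^n}$ is $G_\lambda(f)=(D+\lambda L)(f)=\{Df+\lambda v: v\in L(f)\}$. *)

(* Defs.v *)
From HB Require Import structures.
From mathcomp Require Import all_boot all_order all_algebra.
From mathcomp Require Import reals.
Set Implicit Arguments. Unset Strict Implicit. Unset Printing Implicit Defensive.
Import Order.TTheory GRing.Theory Num.Theory.
Local Open Scope ring_scope.

Section Hyper.
Variables (R : realType) (n : nat).

Definition delta (x : 'I_n) : 'cV[R]_n := \col_i (if i == x then 1 else 0).

Definition dotv (b f : 'cV[R]_n) : R := (b^T *m f) 0 0.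

Definition in_Be (e : {set 'I_n}) (b : 'cV[R]_n) : Prop :=
  exists c : 'I_n -> 'I_n -> R,
    (forall x y, 0 <= c x y) /\
    (forall x y, c x y != 0 -> (x \in e) && (y \in e)) /\
    \sum_x \sum_y c x y = 1 /\
    b = \sum_x \sum_y c x y *: (delta x - delta y).

Definition argmax_Be (e : {set 'I_n}) (f b : 'cV[R]_n) : Prop :=
  in_Be e b /\ forall b', in_Be e b' -> dotv b' f <= dotv b f.

Definition Lset (E : {set {set 'I_n}}) (w : {set 'I_n} -> R) (f v : 'cV[R]_n)
  : Prop :=
  exists b : {set 'I_n} -> 'cV[R]_n,
    (forall e, e \in E -> argmax_Be e f (b e)) /\
    v = \sum_(e in E) (w e * dotv (b e) f) *: b e.

Definition Dmx (d : 'I_n -> R) : 'M[R]_n := \matrix_(i, j) (if i == j then d i else 0).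

Definition Gset (E : {set {set 'I_n}}) (w : {set 'I_n} -> R) (d : 'I_n -> R)
  (lam : R) (f g : 'cV[R]_n) : Prop :=
  exists v, Lset E w f v /\ g = Dmx d *m f + lam *: v.

(* f and g lie in the same order-pattern class U_rho *)
Definition same_pattern (f g : 'cV[R]_n) : Prop :=
  forall x y : 'I_n, Num.sg (f x 0 - f y 0) = Num.sg (g x 0 - g y 0).

Definition is_subfield (S : R -> Prop) : Prop :=
  S 0 /\ S 1 /\ (forall x y, S x -> S y -> S (x + y)) /\
  (forall x, S x -> S (- x)) /\ (forall x y, S x -> S y -> S (x * y)) /\
  (forall x, S x -> x != 0 -> S x^-1).

(* K = Q({w_e}_{e in E}, {d_x}_x): the smallest subfield containing the weights *)
Definition inK (E : {set {set 'I_n}}) (w : {set 'I_n} -> R) (d : 'I_n -> R)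
  (a : R) : Prop :=
  forall S : R -> Prop, is_subfield S ->
    (forall e, e \in E -> S (w e)) -> (forall x, S (d x)) -> S a.

Definition polyK E w d (p : {poly R}) : Prop := forall k, inK E w d p`_k.

(* evaluation at z = lam of the matrix of rational functions (P i j)/(Q i j) *)
Definition eval_ratmx (P Q : 'M[{poly R}]_n) (lam : R) : 'M[R]_n :=
  \matrix_(i, j) ((P i j).[lam] / (Q i j).[lam]).

End Hyper.

(* Main.v *)
Require Import Defs.
From HB Require Import structures.
From mathcomp Require Import all_boot all_order all_algebra.
From mathcomp Require Import reals.
From mathcomp Require Import ring lra.
Import Order.TTheory GRing.Theory Num.Theory.
Local Open Scope ring_scope.
Set Implicit Arguments. Unset Strict Implicit. Unset Printing Implicit Defensive.

Lemma sum_ind (R : realType) n (t : 'I_n) (F : 'I_n -> R) :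
  \sum_b (b == t)%:R * F b = F t.
Proof.
by rewrite (bigD1 t) //= eqxx mul1r big1 ?addr0 // => b /negbTE ->; rewrite mul0r.
Qed.

Section Main.
Variables (R : realType) (n : nat) (x0 : 'I_n).
Variables (E : {set {set 'I_n}}) (w : {set 'I_n} -> R) (d : 'I_n -> R).
Hypothesis hE : forall e, e \in E -> e != set0.
Hypothesis hw : forall e, e \in E -> 0 < w e.
Hypothesis hd : forall x, 0 < d x.
Variable rho : 'cV[R]_n.

Definition r x := odflt x [pick y | rho y 0 == rho x 0].

Lemma rP x : rho (r x) 0 = rho x 0.
Proof. by rewrite /r; case: pickP => [y /eqP|]. Qed.

Lemma r_eq x y : rho x 0 = rho y 0 -> r x = r y.
Proof.
move=> H; rewrite /r.
have -> : [pick z | rho z 0 == rho x 0] = [pick z | rho z 0 == rho y 0].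
  by apply: eq_pick => z; rewrite H.
by case: pickP => // H0; have := H0 y; rewrite eqxx.
Qed.

Lemma rr x : r (r x) = r x.
Proof. by apply: r_eq; rewrite rP. Qed.

Definition xmax (e : {set 'I_n}) :=
  odflt x0 [pick x in e | [forall y in e, rho y 0 <= rho x 0]].
Definition xmin (e : {set 'I_n}) :=
  odflt x0 [pick x in e | [forall y in e, rho x 0 <= rho y 0]].
Definition top e := r (xmax e).
Definition bot e := r (xmin e).
Definition u e (a : 'I_n) : R := (a == top e)%:R - (a == bot e)%:R.
Definition dd (a : 'I_n) : R := if r a == a then \sum_(x | r x == a) d x else 1.
Definition Mmat (lam : R) : 'M[R]_n :=
  \matrix_(a, b) ((a == b)%:R * dd a + lam * \sum_(e in E) w e * u e a * u e b).

Lemma sum_u e (F : 'I_n -> R) : \sum_b u e b * F b = F (top e) - F (bot e).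
Proof.
rewrite /u; under eq_bigr do rewrite mulrBl.
by rewrite sumrB !sum_ind.
Qed.

Lemma Mmat_mul lam (x : 'cV[R]_n) a :
  (Mmat lam *m x) a 0 = dd a * x a 0 +
     lam * \sum_(e in E) w e * u e a * (x (top e) 0 - x (bot e) 0).
Proof.
rewrite mxE; under eq_bigr do rewrite mxE mulrDl.
rewrite big_split /=; congr (_ + _).
  under eq_bigr do rewrite (mulrC _ (dd a)) -mulrA (eq_sym a). by rewrite -big_distrr /= sum_ind.
under eq_bigr do rewrite -mulrA mulr_suml.
rewrite -big_distrr /=; congr (_ * _).
rewrite exchange_big /=; apply: eq_bigr => e _.
by rewrite -(sum_u e (fun b => x b 0)) big_distrr /=; apply: eq_bigr => b _; rewrite !mulrA.
Qed.

Lemma dd_gt0 a : 0 < dd a.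
Proof.
rewrite /dd; case: eqP => // Ha.
by rewrite (bigD1 a) ?Ha //= ltr_wpDr ?hd // sumr_ge0 // => x _; apply/ltW.
Qed.


Lemma u_term e a (x : 'cV[R]_n) : (forall j, x a 0 <= x j 0) ->
  u e a * (x (top e) 0 - x (bot e) 0) <= 0.
Proof.
move=> H; have Ht := H (top e); have Hb := H (bot e).
rewrite /u; case: (eqVneq a (top e)) => [E1|N1]; case: (eqVneq a (bot e)) => [E2|N2] /=;
  rewrite -?E1 -?E2 /=; try lra.
Qed.

Lemma minprinc lam (x : 'cV[R]_n) : 0 <= lam ->
  (forall a, 0 <= (Mmat lam *m x) a 0) -> forall a, 0 <= x a 0.
Proof.
move=> hl H a.
case: (@arg_minP _ _ _ x0 predT (fun i => x i 0) isT) => am _ Ham.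
have Hm : forall j, x am 0 <= x j 0 by move=> j; apply: Ham.
apply: le_trans (Hm a).
have := H am; rewrite Mmat_mul => H1.
have H2 : lam * \sum_(e in E) w e * u e am * (x (top e) 0 - x (bot e) 0) <= 0.
  apply: mulr_ge0_le0 => //; rewrite sumr_le0 // => e he.
  by rewrite -mulrA pmulr_rle0 ?hw // u_term.
have H3 : 0 <= dd am * x am 0 by lra.
by rewrite pmulr_rge0 ?dd_gt0 in H3.
Qed.


Lemma Mmat_tr lam : (Mmat lam)^T = Mmat lam.
Proof.
apply/matrixP => a b; rewrite !mxE eq_sym; congr (_ + _).
  by case: eqVneq => [->|]; rewrite ?mul0r.
congr (_ * _); apply: eq_bigr => e _; by rewrite -!mulrA (mulrC (u e b)).
Qed.

Lemma Mmat_unit lam : 0 < lam -> Mmat lam \in unitmx.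
Proof.
move=> hl; rewrite unitmxE unitfE; apply/negP => /det0P [v vn0 hv].
have hx : Mmat lam *m v^T = 0 by rewrite -[Mmat lam]Mmat_tr -trmx_mul hv trmx0.
have H1 : forall a, 0 <= v^T a 0.
  by apply: (@minprinc lam v^T (ltW hl)) => a; rewrite hx mxE.
have H2 : forall a, 0 <= (- v^T) a 0.
  by apply: (@minprinc lam (- v^T) (ltW hl)) => a; rewrite mulmxN hx oppr0 mxE.
move/eqP: vn0; apply; apply/matrixP => i j; rewrite (ord1 i).
have := H1 j; have := H2 j; rewrite !mxE => A B; lra.
Qed.


Lemma inv_ge0 lam i j : 0 < lam -> 0 <= invmx (Mmat lam) i j.
Proof.
move=> hl.
have -> : invmx (Mmat lam) i j = (col j (invmx (Mmat lam))) i 0 by rewrite mxE.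
apply: (@minprinc lam _ (ltW hl)) => a.
by rewrite colE mulmxA mulmxV ?Mmat_unit // mul1mx mxE ler0n.
Qed.


Lemma delta_sum (x : 'I_n) (h : 'I_n -> R) :
  \sum_i (if i == x then 1 else 0) * h i = h x.
Proof.
by rewrite (bigD1 x) //= eqxx mul1r big1 ?addr0 // => i /negbTE ->; rewrite mul0r.
Qed.

Lemma lin_Be (c : 'I_n -> 'I_n -> R) (h : 'I_n -> R) :
  \sum_i (\sum_x \sum_y c x y *: (delta R x - delta R y)) i 0 * h i
  = \sum_x \sum_y c x y * (h x - h y).
Proof.
under eq_bigr do rewrite summxE mulr_suml.
rewrite exchange_big /=; apply: eq_bigr => x _.
under eq_bigr do rewrite summxE mulr_suml.
rewrite exchange_big /=; apply: eq_bigr => y _.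
have E1 : forall i, (c x y *: (delta R x - delta R y)) i 0 * h i =
  c x y * ((if i == x then 1 else 0) * h i) -
  c x y * ((if i == y then 1 else 0) * h i).
  by move=> i; rewrite !mxE; ring.
by rewrite (eq_bigr _ (fun i _ => E1 i)) sumrB -!big_distrr /= !delta_sum mulrBr.
Qed.

Lemma dotv_sum (b f : 'cV[R]_n) : dotv b f = \sum_i b i 0 * f i 0.
Proof. by rewrite /dotv mxE; apply: eq_bigr => i _; rewrite mxE. Qed.

Lemma block_sum (F : 'I_n -> R) a :
  \sum_(j | r j == a) F j = \sum_j F j * (r j == a)%:R.
Proof. by rewrite big_mkcond; apply: eq_bigr => j _; case: eqP; rewrite ?mulr1 ?mulr0. Qed.

Lemma sum2_ind (V : lmodType R) (a b : 'I_n) (F : 'I_n -> 'I_n -> V) :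
  \sum_x \sum_y (if (x == a) && (y == b) then 1 else 0) *: F x y = F a b.
Proof.
rewrite (bigD1 a) //=.
rewrite [X in _ + X]big1 ?addr0; last first.
  by move=> x /negbTE Hx; apply: big1 => y _; rewrite Hx scale0r.
rewrite (bigD1 b) //= ?eqxx /= scale1r [X in _ + X]big1 ?addr0 // => y /negbTE ->.
by rewrite scale0r.
Qed.

Lemma sum2_indR (a b : 'I_n) :
  \sum_x \sum_y (if (x == a) && (y == b) then 1 else 0) = 1 :> R.
Proof.
rewrite (bigD1 a) //=.
rewrite [X in _ + X]big1 ?addr0; last first.
  by move=> x /negbTE Hx; apply: big1 => y _; rewrite Hx.
by rewrite (bigD1 b) //= ?eqxx /= [X in _ + X]big1 ?addr0 // => y /negbTE ->.
Qed.

Lemma Be_star (e : {set 'I_n}) (xm ym : 'I_n) : xm \in e -> ym \in e -> in_Be e (delta R xm - delta R ym).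
Proof.
move=> hx hy; exists (fun x y => if (x == xm) && (y == ym) then 1 else 0).
split; first by move=> x y; case: ifP.
split; first by move=> x y; case: ifP => [/andP[/eqP -> /eqP ->] _|_]; rewrite ?hx ?hy ?eqxx.
split; first exact: sum2_indR.
by rewrite (sum2_ind xm ym (fun x y => delta R x - delta R y)).
Qed.

Lemma xmax_spec e : e != set0 ->
  xmax e \in e /\ forall y, y \in e -> rho y 0 <= rho (xmax e) 0.
Proof.
move=> ne; rewrite /xmax; case: pickP => [x /andP[xe /forall_inP H] | H] /=.
  by split.
case/set0Pn: ne => z ze.
case: (@arg_maxP _ _ _ z (mem e) (fun i => rho i 0) ze) => m me Hm.
suff : (m \in e) && [forall y in e, rho y 0 <= rho m 0] by rewrite H.
by apply/andP; split => //; apply/forall_inP => y ye; exact: Hm.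
Qed.

Lemma xmin_spec e : e != set0 ->
  xmin e \in e /\ forall y, y \in e -> rho (xmin e) 0 <= rho y 0.
Proof.
move=> ne; rewrite /xmin; case: pickP => [x /andP[xe /forall_inP H] | H] /=.
  by split.
case/set0Pn: ne => z ze.
case: (@arg_minP _ _ _ z (mem e) (fun i => rho i 0) ze) => m me Hm.
suff : (m \in e) && [forall y in e, rho m 0 <= rho y 0] by rewrite H.
by apply/andP; split => //; apply/forall_inP => y ye; exact: Hm.
Qed.


Lemma pat_eq (f : 'cV[R]_n) : same_pattern f rho -> forall x y,
  (f x 0 = f y 0) <-> (rho x 0 = rho y 0).
Proof.
move=> hf x y; have := hf x y => H; split => /eqP.
  by rewrite -subr_eq0 -sgr_eq0 H sgr_eq0 subr_eq0 => /eqP.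
by rewrite -subr_eq0 -sgr_eq0 -H sgr_eq0 subr_eq0 => /eqP.
Qed.

Lemma pat_le (f : 'cV[R]_n) : same_pattern f rho -> forall x y,
  rho x 0 <= rho y 0 -> f x 0 <= f y 0.
Proof.
move=> hf x y; have := hf y x => H.
by rewrite -subr_ge0 -sgr_ge0 -H sgr_ge0 subr_ge0.
Qed.

Lemma f_r (f : 'cV[R]_n) : same_pattern f rho -> forall x, f (r x) 0 = f x 0.
Proof. by move=> hf x; apply/(pat_eq hf); rewrite rP. Qed.


Lemma sum2_const (c : 'I_n -> 'I_n -> R) (K : R) :
  \sum_x \sum_y c x y = 1 -> \sum_x \sum_y c x y * K = K.
Proof.
move=> h1; under eq_bigr do rewrite -big_distrl.
by rewrite -big_distrl /= h1 mul1r.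
Qed.

Lemma keyA (f : 'cV[R]_n) (hf : same_pattern f rho) e (he : e \in E)
  (b : 'cV[R]_n) (hb : argmax_Be e f b) a :
  dotv b f * (\sum_(j | r j == a) b j 0) = u e a * (f (top e) 0 - f (bot e) 0).
Proof.
have ne := hE he.
case: (xmax_spec ne) => xme hxm; case: (xmin_spec ne) => yme hym.
have hM : forall y, y \in e -> f y 0 <= f (xmax e) 0.
  by move=> y ye; apply: (pat_le hf); apply: hxm.
have hm : forall y, y \in e -> f (xmin e) 0 <= f y 0.
  by move=> y ye; apply: (pat_le hf); apply: hym.
have ft : f (top e) 0 = f (xmax e) 0 by rewrite /top f_r.
have fb : f (bot e) 0 = f (xmin e) 0 by rewrite /bot f_r.
rewrite ft fb.
set xm := xmax e in xme hxm hM ft *; set ym := xmin e in yme hym hm fb *.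
case: hb => [[c [hc0 [hcs [hc1 hbd]]]] hmax].
have dotc : dotv b f = \sum_x \sum_y c x y * (f x 0 - f y 0).
  by rewrite dotv_sum hbd (lin_Be c (fun i => f i 0)).
have hstar := hmax _ (Be_star xme yme).
have dstar : dotv (delta R xm - delta R ym) f = f xm 0 - f ym 0.
  rewrite dotv_sum -(delta_sum xm (fun i => f i 0)) -(delta_sum ym (fun i => f i 0)).
  rewrite -sumrB; apply: eq_bigr => i _; by rewrite !mxE mulrBl.
have hge : f xm 0 - f ym 0 <= \sum_x \sum_y c x y * (f x 0 - f y 0).
  by rewrite -dotc -dstar.
have hterm : forall x y, c x y * (f x 0 - f y 0) <= c x y * (f xm 0 - f ym 0).
  move=> x y; case: (eqVneq (c x y) 0) => [->|/hcs/andP[xe ye]]; first by rewrite !mul0r.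
  apply: ler_wpM2l => //; have := hM x xe; have := hm y ye; lra.
have hsum1 := sum2_const (f xm 0 - f ym 0) hc1.
have hD : \sum_x \sum_y (c x y * (f xm 0 - f ym 0) - c x y * (f x 0 - f y 0)) = 0.
  apply/eqP; rewrite eq_le; apply/andP; split.
    under eq_bigr do rewrite sumrB.
    by rewrite sumrB hsum1 subr_le0.
  by apply: sumr_ge0 => x _; apply: sumr_ge0 => y _; rewrite subr_ge0; exact: hterm.
have heq : forall x y, c x y * (f x 0 - f y 0) = c x y * (f xm 0 - f ym 0).
  move=> x y.
  have hpos : forall x y, 0 <= c x y * (f xm 0 - f ym 0) - c x y * (f x 0 - f y 0).
    by move=> x' y'; rewrite subr_ge0; exact: hterm.
  have h1 := @psumr_eq0P _ _ predT _ (fun x _ => sumr_ge0 _ (fun y _ => hpos x y)) hD x isT.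
  have h2 := @psumr_eq0P _ _ predT _ (fun y _ => hpos x y) h1 y isT.
  by apply/eqP; rewrite eq_sym -subr_eq0 h2.
have hsupp : forall x y, c x y != 0 -> f x 0 = f xm 0 /\ f y 0 = f ym 0.
  move=> x y cn; have/hcs/andP[xe ye] := cn.
  have H := mulfI cn (heq x y).
  have H1 := hM x xe; have H2 := hm y ye; split; lra.
have hdv : dotv b f = f xm 0 - f ym 0.
  rewrite dotc -[RHS]hsum1; apply: eq_bigr => x _; apply: eq_bigr => y _; exact: heq.
have hblk : \sum_(j | r j == a) b j 0 = u e a.
  rewrite block_sum hbd (lin_Be c (fun j => (r j == a)%:R)).
  rewrite -[RHS](sum2_const (u e a) hc1); apply: eq_bigr => x _; apply: eq_bigr => y _.
  case: (eqVneq (c x y) 0) => [->|cn]; first by rewrite !mul0r.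
  case: (hsupp x y cn) => H1 H2.
  have -> : r x = top e by rewrite /top; apply: r_eq; apply/(pat_eq hf).
  have -> : r y = bot e by rewrite /bot; apply: r_eq; apply/(pat_eq hf).
  by rewrite /u [a == top e]eq_sym [a == bot e]eq_sym.
by rewrite hdv hblk mulrC.
Qed.


Lemma Dmx_mul (f : 'cV[R]_n) j : (Dmx d *m f) j 0 = d j * f j 0.
Proof.
rewrite mxE (bigD1 j) //= !mxE eqxx big1 ?addr0 // => k hk.
by rewrite mxE eq_sym (negbTE hk) mul0r.
Qed.

Lemma Nsolve lam (hl : 0 < lam) (f g : 'cV[R]_n) (hf : same_pattern f rho)
  (hg : Gset E w d lam f g) i :
  \sum_j invmx (Mmat lam) (r i) (r j) * g j 0 = f i 0.
Proof.
case: hg => v [[b [hb hv]] hgv].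
pose phi : 'cV[R]_n := \col_a (if r a == a then f a 0 else 0).
pose h : 'cV[R]_n := \col_a \sum_(j | r j == a) g j 0.
have phir : forall a, phi (r a) 0 = f a 0 by move=> a; rewrite mxE rr eqxx f_r.
have hh : h = Mmat lam *m phi.
  apply/matrixP => a k; rewrite (ord1 k) Mmat_mul mxE.
  have s1 : \sum_(j | r j == a) g j 0 = \sum_(j | r j == a) (d j * f j 0 +
     lam * \sum_(e in E) (w e * dotv (b e) f) * b e j 0).
    by apply: eq_bigr => j _; rewrite hgv hv mxE Dmx_mul mxE summxE; congr (_ + _);
       congr (_ * _); apply: eq_bigr => e _; rewrite mxE.
  rewrite s1 big_split /= -big_distrr /= exchange_big /=.
  congr (_ + _).
    rewrite /dd mxE; case: eqP => Ha.
      under eq_bigr => j /eqP Hj do rewrite -(f_r hf j) Hj.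
      by rewrite -big_distrl.
    rewrite mulr0; apply: big1 => j /eqP Hj; case: Ha; by rewrite -Hj rr.
  congr (_ * _); apply: eq_bigr => e he.
  rewrite -big_distrr /= -mulrA (keyA hf he (hb e he)) mulrA.
  by rewrite /top /bot !phir !(f_r hf).
rewrite (partition_big r predT) //=.
have H1 : forall a, \sum_(j | r j == a) invmx (Mmat lam) (r i) (r j) * g j 0 =
   invmx (Mmat lam) (r i) a * h a 0.
  move=> a; rewrite mxE big_distrr /=; apply: eq_bigr => j /eqP -> //.
under eq_bigr do rewrite H1.
have -> : \sum_a invmx (Mmat lam) (r i) a * h a 0 = (invmx (Mmat lam) *m h) (r i) 0.
  by rewrite mxE.
by rewrite hh mulmxA mulVmx ?Mmat_unit // mul1mx phir.
Qed.


Lemma inK0 : inK E w d 0. Proof. by move=> S [h0 _]. Qed.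
Lemma inK1 : inK E w d 1. Proof. by move=> S [_ [h1 _]]. Qed.
Lemma inK_add a b : inK E w d a -> inK E w d b -> inK E w d (a + b).
Proof. by move=> ha hb S hS H1 H2; case: (hS) => _ [_ [hp _]]; apply: hp; [exact: ha hS H1 H2|exact: hb hS H1 H2]. Qed.
Lemma inK_opp a : inK E w d a -> inK E w d (- a).
Proof. by move=> ha S hS H1 H2; case: (hS) => _ [_ [_ [ho _]]]; apply: ho; exact: ha hS H1 H2. Qed.
Lemma inK_mul a b : inK E w d a -> inK E w d b -> inK E w d (a * b).
Proof. by move=> ha hb S hS H1 H2; case: (hS) => _ [_ [_ [_ [hm _]]]]; apply: hm; [exact: ha hS H1 H2|exact: hb hS H1 H2]. Qed.
Lemma inK_w e : e \in E -> inK E w d (w e). Proof. by move=> he S _ H1 _; apply: H1. Qed.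
Lemma inK_d x : inK E w d (d x). Proof. by move=> S _ _ H2; apply: H2. Qed.
Lemma inK_nat k : inK E w d k%:R.
Proof. elim: k => [|k IH]; first exact: inK0. by rewrite mulrS; apply: inK_add => //; apply: inK1. Qed.
Lemma inK_sum (I : finType) (P : pred I) (F : I -> R) :
  (forall i, P i -> inK E w d (F i)) -> inK E w d (\sum_(i | P i) F i).
Proof. by move=> H; apply: big_ind => //; [apply: inK0 | apply: inK_add]. Qed.

Lemma polyK_C c : inK E w d c -> polyK E w d c%:P.
Proof. by move=> hc k; rewrite coefC; case: eqP => _ //; apply: inK0. Qed.
Lemma polyK_add p q : polyK E w d p -> polyK E w d q -> polyK E w d (p + q).
Proof. by move=> hp hq k; rewrite coefD; apply: inK_add. Qed.
Lemma polyK_mul p q : polyK E w d p -> polyK E w d q -> polyK E w d (p * q).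
Proof. by move=> hp hq k; rewrite coefM; apply: inK_sum => i _; apply: inK_mul. Qed.
Lemma polyK_X : polyK E w d 'X.
Proof. by move=> k; rewrite coefX; apply: inK_nat. Qed.
Lemma polyK_1 : polyK E w d 1.
Proof. by rewrite -polyC1; apply: polyK_C; apply: inK1. Qed.
Lemma polyK_N1 : polyK E w d (-1).
Proof. by move=> k; rewrite coefN; apply: inK_opp; apply: polyK_1. Qed.
Lemma polyK_exp p k : polyK E w d p -> polyK E w d (p ^+ k).
Proof. move=> hp; elim: k => [|k IH]; first exact: polyK_1. by rewrite exprS; apply: polyK_mul. Qed.

Lemma polyK_det m (A : 'M[{poly R}]_m) :
  (forall i j, polyK E w d (A i j)) -> polyK E w d (\det A).
Proof.
move=> hA; rewrite /determinant.
apply: big_ind => //; first by move=> k; rewrite coef0; apply: inK0.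
  exact: polyK_add.
move=> s _; apply: polyK_mul; first by apply: polyK_exp; apply: polyK_N1.
by apply: big_ind => //; [exact: polyK_1 | exact: polyK_mul].
Qed.

Lemma polyK_adj m (A : 'M[{poly R}]_m) i j :
  (forall i j, polyK E w d (A i j)) -> polyK E w d (\adj A i j).
Proof.
move=> hA; rewrite mxE /cofactor; apply: polyK_mul; first by apply: polyK_exp; apply: polyK_N1.
by apply: polyK_det => k l; rewrite !mxE.
Qed.

Definition Mpoly : 'M[{poly R}]_n :=
  \matrix_(a, b) (((a == b)%:R * dd a)%:P +
                  (\sum_(e in E) w e * u e a * u e b)%:P * 'X).

Lemma Mpoly_K a b : polyK E w d (Mpoly a b).
Proof.
have hu : forall e a, inK E w d (u e a).
  by move=> e a'; rewrite /u; apply: inK_add; [exact: inK_nat | apply: inK_opp; exact: inK_nat].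
rewrite mxE; apply: polyK_add.
  apply: polyK_C; apply: inK_mul; first exact: inK_nat.
  rewrite /dd; case: ifP => _; [by apply: inK_sum => x _; apply: inK_d | exact: inK1].
apply: polyK_mul; last exact: polyK_X.
apply: polyK_C; apply: inK_sum => e he.
by apply: inK_mul; [apply: inK_mul; [exact: inK_w|]|].
Qed.

Lemma Mpoly_eval lam : map_mx (horner_eval lam) Mpoly = Mmat lam.
Proof.
apply/matrixP => a b; rewrite !mxE /horner_eval hornerD hornerMX !hornerC.
by rewrite (mulrC _ lam).
Qed.

Lemma Mpoly_tr : Mpoly^T = Mpoly.
Proof.
apply/matrixP => a b; rewrite !mxE eq_sym; congr (_%:P + _%:P * _).
  by case: eqVneq => [->|]; rewrite ?mul0r.
by apply: eq_bigr => e _; rewrite -!mulrA (mulrC (u e b)).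
Qed.


Lemma main_sec :
  exists P Q : 'M[{poly R}]_n,
    (forall i j, polyK E w d (P i j) /\ polyK E w d (Q i j) /\ Q i j != 0) /\
    (forall i j, P i j * Q j i = P j i * Q i j) /\
    forall lam : R, 0 < lam ->
      (forall i j, (Q i j).[lam] != 0) /\
      (forall i j, 0 <= eval_ratmx P Q lam i j) /\
      (forall f g, same_pattern f rho -> Gset E w d lam f g ->
         eval_ratmx P Q lam *m g = f).
Proof.
have hdet : forall lam, (\det Mpoly).[lam] = \det (Mmat lam).
  by move=> lam; rewrite -Mpoly_eval det_map_mx.
have hadj : forall lam k l, (\adj Mpoly k l).[lam] = \adj (Mmat lam) k l.
  by move=> lam k l; rewrite -Mpoly_eval -map_mx_adj [RHS]mxE.
have hdnz : forall lam, 0 < lam -> \det (Mmat lam) != 0.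
  by move=> lam hl; have := Mmat_unit hl; rewrite unitmxE unitfE.
exists (\matrix_(i, j) (\adj Mpoly) (r i) (r j)), (\matrix_(i, j) \det Mpoly).
have eP : forall i j, (\matrix_(i, j) (\adj Mpoly) (r i) (r j)) i j = \adj Mpoly (r i) (r j).
  by move=> i j; rewrite mxE.
have eQ : forall i j : 'I_n, (\matrix_(i, j) \det Mpoly : 'M_n) i j = \det Mpoly.
  by move=> i j; rewrite mxE.
split.
  move=> i j; rewrite eP eQ; split; first by apply: polyK_adj => k l; apply: Mpoly_K.
  split; first by apply: polyK_det => k l; apply: Mpoly_K.
  apply/negP => /eqP H; have := hdnz 1 ltr01; by rewrite -hdet H horner0 eqxx.
split.
  move=> i j; rewrite !eP !eQ.
  have := congr1 (fun A : 'M[{poly R}]_n => A (r j) (r i)) (trmx_adj Mpoly); rewrite Mpoly_tr mxE => ->.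
  by [].
move=> lam hl.
have hN : forall i j, eval_ratmx (\matrix_(i, j) (\adj Mpoly) (r i) (r j))
    (\matrix_(i, j) \det Mpoly) lam i j = invmx (Mmat lam) (r i) (r j).
  by move=> i j; rewrite [LHS]mxE eP eQ hadj hdet /invmx Mmat_unit // [RHS]mxE mulrC.
split; first by move=> i j; rewrite eQ hdet hdnz.
split; first by move=> i j; rewrite hN inv_ge0.
move=> f g hf hg; apply/matrixP => i k; rewrite (ord1 k) mxE.
under eq_bigr do rewrite hN.
exact: Nsolve.
Qed.

End Main.


Theorem mainTheorem17 (R : realType) (n : nat)
  (E : {set {set 'I_n}}) (w : {set 'I_n} -> R) (d : 'I_n -> R)
  (hE : forall e, e \in E -> e != set0)
  (hw : forall e, e \in E -> 0 < w e)
  (hd : forall x, 0 < d x)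
  (rho : 'cV[R]_n) :
  exists P Q : 'M[{poly R}]_n,
    (* entries P i j / Q i j are elements of K(z) *)
    (forall i j, polyK E w d (P i j) /\ polyK E w d (Q i j) /\ Q i j != 0) /\
    (* symmetry in M_n(K(z)) *)
    (forall i j, P i j * Q j i = P j i * Q i j) /\
    forall lam : R, 0 < lam ->
      (forall i j, (Q i j).[lam] != 0) /\
      (forall i j, 0 <= eval_ratmx P Q lam i j) /\
      (forall f g, same_pattern f rho -> Gset E w d lam f g ->
         eval_ratmx P Q lam *m g = f).
Proof.
move: E w d hE hw hd rho; case: n => [|n] E w d hE hw hd rho.
  exists 0, 0; split; first by case.
  split; first by case.
  move=> lam _; split; first by case.
  split; first by case.
  by move=> f g _ _; apply/matrixP => [[]].
exact: (@main_sec R n.+1 ord0 E w d hE hw hd rho).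
Qed.
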